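(* Let $V$ be a finite-dimensional real vector space with a Lorentzian inner product $g$, and let $V=E_1\oplus\cdots\oplus E_r$ ($r\ge1$) be a $g$-orthogonal direct sum of subspaces on each of which $g$ is non-degenerate, with $E_r$ Lorentzian. For $1\le\beta\le r$ let $g_\beta(X,Y)=g(X_\beta,Y_\beta)$, where $X_\beta,Y_\beta$ are the $E_\beta$-components. Let $p\in E_r$ be a non-zero light-like vector and $\theta=g(p,\cdot)$. Let $\bar g_1=g,\bar g_2,\dots,\bar g_{r+1}$ be linearly independent symmetric bilinear forms on $V$ with $$\bar g_\alpha=\sum_{\beta=1}^r C_{\beta\alpha}g_\beta+C_{r+1\,\alpha}\,\theta\otimes\theta,$$ and assume $C_{r\alpha}=0$ and $C_{r+1\,\alpha}\neq0$ for all $2\le\alpha\le r+1$. Let $W=\bigcap_{\alpha=2}^{r+1}\ker\bar g_\alpha$ and let $W^{\perp_g}$ be its $g$-orthogonal complement. Then $$\{X\in V\mid \bar g_\alpha(X,Y)=0\text{ for all }2\le\alpha\le r+1\text{ and all }Y\in W^{\perp_g}\}=E_r.$$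
   Context: For a symmetric bilinear form $b$ on $V$, $\ker b=\{X\in V\mid b(X,Y)=0\ \forall Y\in V\}$. *)

(* Defs.v *)
From HB Require Import structures.
From mathcomp Require Import all_boot all_order all_algebra.
From mathcomp Require Import reals.
Set Implicit Arguments. Unset Strict Implicit. Unset Printing Implicit Defensive.
Import Order.TTheory GRing.Theory Num.Theory.
Local Open Scope ring_scope.

Section Forms.
Variables (R : realType) (V : vectType R).

Definition bilinear_form (b : V -> V -> R) : Prop :=
  (forall a x y z, b (a *: x + y) z = a * b x z + b y z) /\
  (forall a x y z, b z (a *: x + y) = a * b z x + b z y).

Definition symmetric_form (b : V -> V -> R) : Prop := forall x y, b x y = b y x.

Definition sym_bilinear_form (b : V -> V -> R) : Prop :=
  bilinear_form b /\ symmetric_form b.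

Definition form_ker (b : V -> V -> R) : V -> Prop :=
  fun X => forall Y, b X Y = 0.

Definition nondeg_on (b : V -> V -> R) (U : {vspace V}) : Prop :=
  forall x, x \in U -> (forall y, y \in U -> b x y = 0) -> x = 0.

Definition neg_def_on (b : V -> V -> R) (S : {vspace V}) : Prop :=
  forall x, x \in S -> x != 0 -> b x x < 0.

(* b restricted to U is Lorentzian: non-degenerate of index 1, i.e. the
   maximal dimension of a subspace of U on which b is negative definite is 1
   (signature convention (-,+,...,+)). *)
Definition lorentzian_on (b : V -> V -> R) (U : {vspace V}) : Prop :=
  [/\ nondeg_on b U,
      exists2 u, u \in U & b u u < 0 &
      forall S : {vspace V}, (S <= U)%VS -> neg_def_on b S -> (\dim S <= 1)%N].

Definition lorentzian (b : V -> V -> R) : Prop :=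
  sym_bilinear_form b /\ lorentzian_on b fullv.

Definition orth_subspaces (b : V -> V -> R) (U1 U2 : {vspace V}) : Prop :=
  forall x y, x \in U1 -> y \in U2 -> b x y = 0.

Definition component (n : nat) (E : 'I_n -> {vspace V}) (i : 'I_n) (X : V) : V :=
  sumv_pi (\sum_(j < n) E j)%VS i X.

Definition partial_form (b : V -> V -> R) (n : nat) (E : 'I_n -> {vspace V})
  (i : 'I_n) : V -> V -> R :=
  fun X Y => b (component E i X) (component E i Y).

Definition forms_lin_indep (m : nat) (bs : 'I_m -> V -> V -> R) : Prop :=
  forall c : 'I_m -> R, (forall X Y, \sum_(a < m) c a * bs a X Y = 0) ->
    forall a, c a = 0.

Definition orth_compl (b : V -> V -> R) (W : V -> Prop) : V -> Prop :=
  fun Y => forall X, W X -> b X Y = 0.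

End Forms.

(* Main.v *)
Require Import Defs.
From HB Require Import structures.
From mathcomp Require Import all_boot all_order all_algebra.
From mathcomp Require Import reals.
Import Order.TTheory GRing.Theory Num.Theory.
Local Open Scope ring_scope.

Lemma bil_0l (R : realType) (V : vectType R) (b : V -> V -> R) z :
  bilinear_form b -> b 0 z = 0.
Proof.
move=> [b1 _]; have h := b1 1 0 0 z; rewrite scale1r addr0 mul1r in h.
by apply: (addrI (b 0 z)); rewrite addr0 -h.
Qed.

Lemma bil_0r (R : realType) (V : vectType R) (b : V -> V -> R) z :
  bilinear_form b -> b z 0 = 0.
Proof.
move=> [_ b1]; have h := b1 1 0 0 z; rewrite scale1r addr0 mul1r in h.
by apply: (addrI (b z 0)); rewrite addr0 -h.
Qed.

Lemma bil_suml (R : realType) (V : vectType R) (b : V -> V -> R) n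
  (F : 'I_n -> V) z :
  bilinear_form b -> b (\sum_(i < n) F i) z = \sum_(i < n) b (F i) z.
Proof.
move=> Hb; have hm : {morph (fun x => b x z) : x y / x + y >-> x + y}.
  by move=> x y /=; case: Hb => b1 _; rewrite -{1}[x]scale1r b1 mul1r.
by rewrite (big_morph (fun x => b x z) hm (@bil_0l R V b z Hb)).
Qed.

Theorem lemma3 (R : realType) (V : vectType R) (k : nat)
  (g : V -> V -> R) (E : 'I_k.+1 -> {vspace V}) (p : V)
  (gb : 'I_k.+2 -> V -> V -> R) (C : 'M[R]_k.+2) :
  lorentzian g ->
  directv (\sum_(j < k.+1) E j) ->
  (\sum_(j < k.+1) E j)%VS = fullv ->
  (forall i j : 'I_k.+1, i != j -> orth_subspaces g (E i) (E j)) ->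
  (forall i, nondeg_on g (E i)) ->
  lorentzian_on g (E ord_max) ->
  p \in E ord_max -> p != 0 -> g p p = 0 ->
  gb ord0 = g ->
  (forall a, sym_bilinear_form (gb a)) ->
  forms_lin_indep gb ->
  (forall a X Y, gb a X Y =
      \sum_(b < k.+1) C (widen_ord (leqnSn _) b) a * partial_form g E b X Y
      + C ord_max a * (g p X * g p Y)) ->
  (forall a : 'I_k.+2, a != ord0 -> C (inord k) a = 0) ->
  (forall a : 'I_k.+2, a != ord0 -> C ord_max a != 0) ->
  let W : V -> Prop := fun X => forall a : 'I_k.+2, a != ord0 -> form_ker (gb a) X in
  forall X : V,
    (forall a : 'I_k.+2, a != ord0 ->
       forall Y, orth_compl g W Y -> gb a X Y = 0)
    <-> X \in E ord_max.
Proof.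
move=> [[Hgb _] _] dir full orth nondeg _ pE _ gpp _ _ indep Hgb_def Hck Hcm W X.
have comp_in i x : component E i x \in E i by exact: memv_sum_pi.
have comp_sum x : \sum_(i < k.+1) component E i x = x.
  by apply: sumv_pi_sum; rewrite full memvf.
have comp_id i x j : x \in E i -> component E j x = if j == i then x else 0.
  move=> xi; have /directv_sum_unique U := dir.
  have := U (fun j => component E j x) (fun j => if j == i then x else 0).
  rewrite comp_sum (bigD1 i) //= eqxx big1 ?addr0; last first.
    by move=> l /negbTE ->.
  move=> /(_ (fun j _ => comp_in j x)) h.
  have h2 : [forall (l | true), component E l x == (if l == i then x else 0)].
    by rewrite -h ?eqxx // => l _; case: eqP => [->|_]; rewrite ?mem0v.
  by move/forall_inP: h2 => /(_ j isT)/eqP.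
have gL j x y : y \in E j -> g x y = g (component E j x) y.
  move=> yj; rewrite -{1}(comp_sum x) bil_suml // (bigD1 j) //= big1 ?addr0 //.
  by move=> i ij; apply: (orth i j ij) => //; apply: comp_in.
have HA j a x y : y \in E j -> j != ord_max ->
    gb a x y = C (widen_ord (leqnSn _) j) a * g (component E j x) y.
  move=> yj nj; rewrite Hgb_def.
  have -> : g p y = 0 by apply: (orth ord_max j); rewrite // eq_sym.
  rewrite mulr0 mulr0 addr0 (bigD1 j) //= big1 ?addr0.
    by rewrite /partial_form (comp_id j y j yj) eqxx.
  move=> b bj; rewrite /partial_form (comp_id j y b yj) (negbTE bj).
  by rewrite bil_0r // mulr0.
have HB a x y : x \in E ord_max -> a != ord0 ->
    gb a x y = C ord_max a * (g p x * g p y).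
  move=> xm na; rewrite Hgb_def big1 ?add0r // => b _.
  rewrite /partial_form (comp_id _ x b xm).
  case: eqVneq => [->|nb]; last by rewrite bil_0l // mulr0.
  have -> : widen_ord (leqnSn _) (@ord_max k) = inord k :> 'I_k.+2.
    by apply/val_inj; rewrite /= inordK.
  by rewrite Hck // mul0r.
have count j : j != ord_max -> exists2 a : 'I_k.+2, a != ord0 &
    C (widen_ord (leqnSn _) j) a != 0.
  move=> nj.
  case: (boolP [exists a, (a != ord0) && (C (widen_ord (leqnSn _) j) a != 0)]).
    by case/existsP=> a /andP[]; exists a.
  move/existsPn=> H0; exfalso.
  pose f (i : 'I_k) : 'I_k.+2 := lift (inord k) (lift j i).
  pose B : 'M[R]_(k.+1, k) := \matrix_(a', i) C (f i) (lift ord0 a').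
  have : kermx B != 0.
    rewrite -mxrank_eq0 mxrank_ker subn_eq0 -ltnNge.
    by apply: leq_ltn_trans (rank_leq_col B) _.
  case/rowV0Pn=> v /sub_kermxP vB vn0.
  have key (j0 : 'I_k.+2) :
      \sum_(a' < k.+1) v 0 a' * C j0 (lift ord0 a') = 0.
    case: (unliftP (inord k) j0) => [j1 ->|->]; last first.
      by rewrite big1 // => a' _; rewrite Hck ?mulr0 // eq_sym neq_lift.
    case: (unliftP j j1) => [i ->|->].
      have := congr1 (fun M : 'M[R]_(1, k) => M 0 i) vB; rewrite !mxE => h; apply: etrans h.
      by apply: eq_bigr => a' _; rewrite mxE.
    have -> : lift (inord k) j = widen_ord (leqnSn _) j :> 'I_k.+2.
      have jk : (j < k)%N.
        rewrite ltn_neqAle -ltnS ltn_ord andbT.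
        by apply: contra nj => /eqP hj; apply/eqP/val_inj.
      by apply/val_inj; rewrite /= /bump inordK // leqNgt jk.
    rewrite big1 // => a' _.
    have := H0 (lift ord0 a'); rewrite negb_and negbK.
    by rewrite eq_sym (negbTE (neq_lift _ _)) negbK /= => /eqP ->; rewrite mulr0.
  pose c (a : 'I_k.+2) := if unlift ord0 a is Some a' then v 0 a' else 0.
  have hc : forall X Y, \sum_(a < k.+2) c a * gb a X Y = 0.
    move=> X0 Y0; rewrite big_ord_recl /c unlift_none mul0r add0r.
    under eq_bigr => a' _ do rewrite liftK Hgb_def mulrDr mulr_sumr.
    rewrite big_split /= exchange_big /= big1 ?add0r.
      under eq_bigr => a' _ do rewrite (mulrA (v 0 a')).
      by rewrite -mulr_suml key mul0r.
    move=> b _.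
    under eq_bigr => a' _ do rewrite (mulrA (v 0 a')).
    by rewrite -mulr_suml key mul0r.
  move/negP: vn0; apply; apply/eqP/rowP => a'; rewrite mxE.
  have := indep c hc (lift ord0 a'); rewrite /c liftK.
  by [].
split.
- move=> H; rewrite -(comp_sum X) (bigD1 ord_max) //= big1 ?addr0 //.
  move=> j nj; have [a ha hC] := count j nj.
  apply: (nondeg j); first exact: comp_in.
  move=> y yj; have := H a ha y.
  rewrite (HA j a X y yj nj) => h; apply/eqP.
  have : C (widen_ord (leqnSn _) j) a * g (component E j X) y == 0.
    apply/eqP; apply: h => X' HX'.
    rewrite (gL j X' y yj).
    rewrite (_ : component E j X' = 0) ?bil_0l //.
    apply: (nondeg j); first exact: comp_in.
    move=> z zj; have := HX' a ha z; rewrite (HA j a X' z zj nj) => /eqP.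
    by rewrite mulf_eq0 (negbTE hC) /= => /eqP.
  by rewrite mulf_eq0 (negbTE hC).
- move=> Xm a ha Y HY.
  have Wp : W p by move=> a' ha' Z; rewrite HB // gpp mul0r mulr0.
  by rewrite HB // (HY p Wp) !mulr0.
Qed.
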